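(* Let $K\ge 2$, and let $\boldsymbol{x}_k$, $r_f$, $\boldsymbol{f}_k$, $\boldsymbol{f}$, $\boldsymbol{\eta}^{(\ell)}$ be as in the context. Fix $\ell\le r_f$ and define $w^{(\ell)}=[\lambda_\ell(\operatorname{cov}(\boldsymbol{f}))]^{-1/2}(\boldsymbol{\eta}^{(\ell)})^\top\boldsymbol{f}$ and, for $k\le K$, $z_k^{(\ell)}=0$ if $\boldsymbol{\eta}_k^{(\ell)}=\boldsymbol{0}$ and $z_k^{(\ell)}=(\boldsymbol{\eta}_k^{(\ell)}/\|\boldsymbol{\eta}_k^{(\ell)}\|_F)^\top\boldsymbol{f}_k$ otherwise. For a real number $\alpha$, put $c=\alpha w^{(\ell)}$ and $d_k=z_k^{(\ell)}-c$ ($k\le K$). Let $\alpha^{(\ell)}$ be defined by: (C.1) $|\alpha^{(\ell)}|$ is the smallest value of $|\alpha|$ such that at least one pair $j\neq k$ satisfies $d_j\perp d_k$; (C.2) if (C.1) admits two values of $\alpha$, then $\alpha^{(\ell)}$ is the negative one. For $1\le j<k\le K$ let $$\Delta^{(\ell)}_{jk}=\big[\cos\{\theta(w^{(\ell)},z_j^{(\ell)})\}+\cos\{\theta(w^{(\ell)},z_k^{(\ell)})\}\big]^2-4\cos\{\theta(z_j^{(\ell)},z_k^{(\ell)})\}.$$ Then $\alpha^{(\ell)}$ exists (in particular, there is at least one pair $j<k$ with $\Delta^{(\ell)}_{jk}\ge 0$), and $$\alpha^{(\ell)}\in\operatorname*{argmin}_{\alpha^{(\ell)}_{jk}}\Big\{|\alpha^{(\ell)}_{jk}|:\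 \alpha^{(\ell)}_{jk}=\tfrac12\big[\cos\{\theta(w^{(\ell)},z_j^{(\ell)})\}+\cos\{\theta(w^{(\ell)},z_k^{(\ell)})\}-(\Delta^{(\ell)}_{jk})^{1/2}\big],\ \Delta^{(\ell)}_{jk}\ge0,\ 1\le j<k\le K\Big\}.$$
   Context: $\mathcal{L}_0^2$ denotes the vector space of real-valued random variables with zero mean and finite variance, endowed with the covariance as inner product; $\|x\|=\sqrt{\operatorname{var}(x)}$, $\perp$ means zero covariance, and $\theta(x,y)$ is the angle in this inner product space, so $\cos\{\theta(x,y)\}=\operatorname{corr}(x,y)$ with the convention $\operatorname{corr}(x,0)=0$. $\boldsymbol{x}_1,\dots,\boldsymbol{x}_K$ are random vectors ($\boldsymbol{x}_k\in\mathbb{R}^{p_k}$) with entries in $\mathcal{L}_0^2$; $\operatorname{span}(\boldsymbol{x}_k^\top)$ is the subspace spanned by the entries of $\boldsymbol{x}_k$, of dimension $r_k\ge1$; $r_f=\dim\sum_k\operatorname{span}(\boldsymbol{x}_k^\top)$. $\boldsymbol{f}_k\in\mathbb{R}^{r_k}$ is a random vector whose entries form an orthonormal basis of $\operatorname{span}(\boldsymbol{x}_k^\top)$, $\boldsymbol{f}=(\boldsymbol{f}_1^\top,\dots,\boldsymbol{f}_K^\top)^\top$, and $\boldsymbol{\eta}^{(1)},\dots,\boldsymbol{\eta}^{(r_f)}$ are orthonormal eigenvectors of $\operatorname{cov}(\boldsymbol{f})$, $\boldsymbol{\eta}^{(\ell)}$ corresponding to its $\ell$th largest eigenvalue $\lambda_\ell(\operatorname{cov}(\boldsymbol{f}))$,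 partitioned as $\boldsymbol{\eta}^{(\ell)}=((\boldsymbol{\eta}^{(\ell)}_1)^\top,\dots,(\boldsymbol{\eta}^{(\ell)}_K)^\top)^\top$ with $\boldsymbol{\eta}^{(\ell)}_k\in\mathbb{R}^{r_k}$. *)

(* Defs.v *)
(* L_0^2 is modelled as an abstract real inner-product space
   (V, cv) over a real closed field R; cv plays the role of the covariance. *)
From HB Require Import structures.
From mathcomp Require Import all_boot all_order all_algebra.
Set Implicit Arguments. Unset Strict Implicit. Unset Printing Implicit Defensive.
Import Order.TTheory GRing.Theory Num.Theory.
Local Open Scope ring_scope.

Section InnerProductSpace.
Variables (R : rcfType) (V : lmodType R).

Definition is_inner_product (cv : V -> V -> R) : Prop :=
  [/\ forall x y, cv x y = cv y x,
      forall a x y z, cv (a *: x + y) z = a * cv x z + cv y z,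
      forall x, 0 <= cv x x &
      forall x, cv x x = 0 -> x = 0].

Definition vnorm (cv : V -> V -> R) (x : V) : R := Num.sqrt (cv x x).

Definition perp (cv : V -> V -> R) (x y : V) : Prop := cv x y = 0.

Definition cos_angle (cv : V -> V -> R) (x y : V) : R :=
  if (vnorm cv x == 0) || (vnorm cv y == 0) then 0
  else cv x y / (vnorm cv x * vnorm cv y).

Definition in_span (I : finType) (g : I -> V) (v : V) : Prop :=
  exists c : I -> R, v = \sum_i c i *: g i.

Definition lin_indep (I : finType) (g : I -> V) (A : {set I}) : Prop :=
  forall c : I -> R, \sum_(i in A) c i *: g i = 0 -> forall i, i \in A -> c i = 0.

Definition span_dim (I : finType) (g : I -> V) (n : nat) : Prop :=
  (exists A : {set I}, lin_indep g A /\ #|A| = n) /\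
  (forall A : {set I}, lin_indep g A -> (#|A| <= n)%N).

End InnerProductSpace.

Section Blocks.
Variables (R : rcfType) (V : lmodType R) (cv : V -> V -> R).
Variables (K : nat) (r : 'I_K -> nat).

(* index set of the concatenated vector f = (f_1^T, ..., f_K^T)^T *)
Definition idx := {k : 'I_K & 'I_(r k)}.

Variable f : forall k : 'I_K, 'I_(r k) -> V.

Definition fcat (t : idx) : V := f (tagged t).

Definition covf (s t : idx) : R := cv (fcat s) (fcat t).

Definition block (eta : idx -> R) (k : 'I_K) (i : 'I_(r k)) : R :=
  eta (@existT _ (fun k => 'I_(r k)) k i).
Arguments block eta k i : clear implicits.

Definition frob_block (eta : idx -> R) (k : 'I_K) : R :=
  Num.sqrt (\sum_(i < r k) block eta k i ^+ 2).

Definition wvar (lam : R) (eta : idx -> R) : V :=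
  (Num.sqrt lam)^-1 *: \sum_(t : idx) eta t *: fcat t.

Definition zvar (eta : idx -> R) (k : 'I_K) : V :=
  if [forall i : 'I_(r k), block eta k i == 0] then 0
  else (frob_block eta k)^-1 *: \sum_(i < r k) block eta k i *: f i.

Definition dvar (lam : R) (eta : idx -> R) (a : R) (k : 'I_K) : V :=
  zvar eta k - a *: wvar lam eta.

Definition orth_pair (lam : R) (eta : idx -> R) (a : R) : Prop :=
  exists j k : 'I_K, j != k /\ perp cv (dvar lam eta a j) (dvar lam eta a k).

Definition alpha_spec (lam : R) (eta : idx -> R) (a : R) : Prop :=
  [/\ orth_pair lam eta a,
      forall b, orth_pair lam eta b -> `|a| <= `|b| &
      forall b, orth_pair lam eta b -> `|b| = `|a| -> b <> a -> a < 0].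

Definition cwz (lam : R) (eta : idx -> R) (k : 'I_K) : R :=
  cos_angle cv (wvar lam eta) (zvar eta k).

Definition Delta (lam : R) (eta : idx -> R) (j k : 'I_K) : R :=
  (cwz lam eta j + cwz lam eta k) ^+ 2 - 4 * cos_angle cv (zvar eta j) (zvar eta k).

Definition alpha_jk (lam : R) (eta : idx -> R) (j k : 'I_K) : R :=
  (cwz lam eta j + cwz lam eta k - Num.sqrt (Delta lam eta j k)) / 2.

Definition in_argmin_alpha (lam : R) (eta : idx -> R) (a : R) : Prop :=
  exists j k : 'I_K,
    [/\ (j < k)%N, 0 <= Delta lam eta j k, a = alpha_jk lam eta j k &
        forall j' k' : 'I_K, (j' < k')%N -> 0 <= Delta lam eta j' k' ->
          `|a| <= `|alpha_jk lam eta j' k'|].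

End Blocks.

(* Main.v *)
Require Import Defs.
From HB Require Import structures.
From mathcomp Require Import all_boot all_order all_algebra.
From Stdlib Require Import Classical.
From mathcomp Require Import ring lra.
Import Order.TTheory GRing.Theory Num.Theory.
Set Implicit Arguments. Unset Strict Implicit. Unset Printing Implicit Defensive.
Local Open Scope ring_scope.

Section IP.
Variables (R : rcfType) (V : lmodType R) (cv : V -> V -> R).
Hypothesis Hcv : is_inner_product cv.

Lemma cvC x y : cv x y = cv y x.
Proof. by case: Hcv => H _ _ _; apply: H. Qed.
Lemma cvZDl a x y z : cv (a *: x + y) z = a * cv x z + cv y z.
Proof. by case: Hcv => _ H _ _; apply: H. Qed.
Lemma cv_ge0 x : 0 <= cv x x.
Proof. by case: Hcv => _ _ H _; apply: H. Qed.
Lemma cv_eq0 x : cv x x = 0 -> x = 0.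
Proof. by case: Hcv => _ _ _ H; apply: H. Qed.
Lemma cvDl x y z : cv (x + y) z = cv x z + cv y z.
Proof. by rewrite -{1}(scale1r x) cvZDl mul1r. Qed.
Lemma cv0l z : cv 0 z = 0.
Proof.
have := cvDl 0 0 z; rewrite addr0 => /eqP; rewrite -subr_eq0 opprD addrA subrr add0r oppr_eq0 => /eqP //.
Qed.
Lemma cvZl a x z : cv (a *: x) z = a * cv x z.
Proof. by rewrite -(addr0 (a *: x)) cvZDl cv0l addr0. Qed.
Lemma cvNl x z : cv (- x) z = - cv x z.
Proof. by rewrite -scaleN1r cvZl mulN1r. Qed.
Lemma cvBl x y z : cv (x - y) z = cv x z - cv y z.
Proof. by rewrite cvDl cvNl. Qed.
Lemma cvDr x y z : cv z (x + y) = cv z x + cv z y.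
Proof. by rewrite cvC cvDl !(cvC z). Qed.
Lemma cv0r z : cv z 0 = 0.
Proof. by rewrite cvC cv0l. Qed.
Lemma cvZr a x z : cv z (a *: x) = a * cv z x.
Proof. by rewrite cvC cvZl cvC. Qed.
Lemma cvBr x y z : cv z (x - y) = cv z x - cv z y.
Proof. by rewrite cvC cvBl !(cvC z). Qed.
Lemma cv_suml (I : Type) (s : seq I) (P : pred I) (F : I -> V) z :
  cv (\sum_(i <- s | P i) F i) z = \sum_(i <- s | P i) cv (F i) z.
Proof. exact: (big_morph (cv ^~ z) (fun x y => cvDl x y z) (cv0l z)). Qed.
Lemma cv_sumr (I : Type) (s : seq I) (P : pred I) (F : I -> V) z :
  cv z (\sum_(i <- s | P i) F i) = \sum_(i <- s | P i) cv z (F i).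
Proof. by rewrite cvC cv_suml; apply: eq_bigr => i _; rewrite cvC. Qed.

Lemma cos_unit x y : (x = 0 \/ cv x x = 1) -> (y = 0 \/ cv y y = 1) ->
  cos_angle cv x y = cv x y.
Proof.
rewrite /cos_angle /vnorm => Hx Hy.
case: Hx => [->|Hx]; first by rewrite !cv0l sqrtr0 eqxx.
case: Hy => [->|Hy]; first by rewrite !cv0r sqrtr0 eqxx orbT.
by rewrite Hx Hy sqrtr1 oner_eq0 mulr1 divr1.
Qed.
End IP.

Unset Implicit Arguments.
Section Fixed.
Variables (R : rcfType) (V : lmodType R) (cv : V -> V -> R).
Hypothesis Hcv : is_inner_product cv.
Variables (K : nat) (r : 'I_K -> nat) (f : forall k : 'I_K, 'I_(r k) -> V).
Variables (lam : R) (eta : idx r -> R).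
Hypothesis Hf : forall k (i j : 'I_(r k)), cv (f k i) (f k j) = (i == j)%:R.
Hypothesis Heig : forall t, \sum_(s : idx r) covf cv f t s * eta s = lam * eta t.
Hypothesis Hnorm : \sum_(t : idx r) eta t * eta t = 1.
Hypothesis Hlam : 0 < lam.
Hypothesis HK : (2 <= K)%N.

Local Notation w := (wvar f lam eta).
Local Notation z := (zvar f eta).
Local Notation sq := (Num.sqrt lam).

Lemma sum_idx (M : nmodType) (G : idx r -> M) :
  \sum_(t : idx r) G t = \sum_(k < K) \sum_(i < r k) G (existT _ k i).
Proof.
rewrite (sig_big_dep xpredT (fun k => xpredT) (fun (k : 'I_K) (i : 'I_(r k)) => G (existT _ k i))) /=.
by apply: eq_bigr => -[k i].
Qed.

Lemma cv_w_l y : cv w y = sq^-1 * \sum_(u : idx r) eta u * cv (fcat f u) y.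
Proof.
rewrite /wvar (cvZl Hcv) (cv_suml Hcv); congr (_ * _).
by apply: eq_bigr => u _; rewrite (cvZl Hcv).
Qed.

Lemma cv_w_f t : cv w (fcat f t) = sq^-1 * lam * eta t.
Proof.
rewrite cv_w_l -mulrA -Heig; congr (_ * _).
by apply: eq_bigr => u _; rewrite /covf (cvC Hcv) mulrC.
Qed.

Lemma sq_pos : 0 < sq. Proof. by rewrite sqrtr_gt0. Qed.

Lemma cv_ww : cv w w = 1.
Proof.
rewrite cv_w_l.
under eq_bigr => u _ do rewrite (cvC Hcv) cv_w_f.
have -> : \sum_(u : idx r) eta u * (sq^-1 * lam * eta u) =
          sq^-1 * lam * \sum_(u : idx r) eta u * eta u.
  by rewrite mulr_sumr; apply: eq_bigr => u _; ring.
have sq2 : sq ^+ 2 = lam by rewrite sqr_sqrtr // ltW.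
have sq0 : sq != 0 := lt0r_neq0 sq_pos.
rewrite Hnorm mulr1; move: sq0 sq2; set s := sq => s0 s2; rewrite -s2; field.
by rewrite s0.
Qed.

Local Notation rho k := (frob_block eta k).
Local Notation blk k i := (@block _ _ r eta k i).
Definition bsum k := \sum_(i < r k) blk k i *: f k i.

Lemma rho_ge0 k : 0 <= rho k.
Proof. exact: sqrtr_ge0. Qed.

Lemma rho_pos k : ~~ [forall i : 'I_(r k), blk k i == 0] -> 0 < rho k.
Proof.
move=> /forallPn [i /negP Hi].
rewrite /frob_block sqrtr_gt0 lt0r; apply/andP; split; last first.
  by apply: sumr_ge0 => j _; exact: sqr_ge0.
apply/eqP => H0; apply: Hi; apply/eqP.
have := @psumr_eq0P _ _ xpredT (fun j : 'I_(r k) => blk k j ^+ 2) (fun j _ => sqr_ge0 _) H0 i isT.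
by move/eqP; rewrite sqrf_eq0 => /eqP.
Qed.

Lemma bsum_z k : bsum k = rho k *: z k.
Proof.
rewrite /zvar; case: ifP => [/forallP H0|/negbT Hn].
  rewrite scaler0 /bsum big1 // => i _.
  by move/eqP: (H0 i) => ->; rewrite scale0r.
rewrite /bsum scalerA divff ?scale1r //.
exact: lt0r_neq0 (rho_pos k Hn).
Qed.

Lemma cv_bsum k : cv (bsum k) (bsum k) = rho k ^+ 2.
Proof.
rewrite /frob_block sqr_sqrtr; last by apply: sumr_ge0 => j _; exact: sqr_ge0.
rewrite /bsum (cv_suml Hcv); apply: eq_bigr => i _.
rewrite (cvZl Hcv) (cv_sumr Hcv) (bigD1 i) //= (cvZr Hcv) Hf eqxx big1 ?addr0.
  by rewrite mulr1 expr2.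
by move=> j Hj; rewrite (cvZr Hcv) Hf eq_sym (negbTE Hj) mulr0.
Qed.

Lemma z_unit k : z k = 0 \/ cv (z k) (z k) = 1.
Proof.
rewrite /zvar; case: ifP => [_|/negbT Hn]; [by left | right].
have := cv_bsum k; rewrite /bsum => Hb.
rewrite (cvZl Hcv) (cvZr Hcv) Hb.
have := lt0r_neq0 (rho_pos k Hn); set q := rho k => q0.
by field.
Qed.

Definition beta k := sq^-1 * rho k.

Lemma beta_ge0 k : 0 <= beta k.
Proof. by rewrite /beta mulr_ge0 ?invr_ge0 ?sqrtr_ge0 ?rho_ge0. Qed.

Lemma w_decomp : w = \sum_(k < K) beta k *: z k.
Proof.
rewrite /wvar (sum_idx _ (fun t => eta t *: fcat f t)) scaler_sumr.
apply: eq_bigr => k _.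
have -> : \sum_(i < r k) eta (existT _ k i) *: fcat f (existT _ k i) = bsum k by [].
by rewrite bsum_z scalerA.
Qed.

Lemma c_ge0 k : 0 <= cv (z k) w.
Proof.
rewrite /zvar; case: ifP => [_|/negbT Hn]; first by rewrite (cv0l Hcv).
rewrite (cvZl Hcv) (cv_suml Hcv) mulr_ge0 ?invr_ge0 ?rho_ge0 //.
apply: sumr_ge0 => i _.
rewrite (cvZl Hcv) (cvC Hcv).
have -> : cv w (f k i) = cv w (fcat f (existT _ k i)) by [].
rewrite cv_w_f.
have : 0 <= sq^-1 * lam by rewrite mulr_ge0 ?invr_ge0 ?sqrtr_ge0 // ltW.
rewrite /block; set b := eta _; set q := _ * lam => hq.
have -> : b * (q * b) = q * (b * b) by ring.
by rewrite mulr_ge0 // -expr2 sqr_ge0.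
Qed.

Local Notation c k := (cv (z k) w).
Local Notation cc j k := (cv (z j) (z k)).
Local Notation Dl j k := (Delta cv f lam eta j k).
Local Notation Q j k b := (cc j k - b * (c j + c k) + b ^+ 2).

Lemma cwz_eq k : cwz cv f lam eta k = c k.
Proof.
rewrite /cwz (cos_unit Hcv); first by rewrite (cvC Hcv).
  by right; exact: cv_ww.
exact: z_unit.
Qed.

Lemma cos_zz j k : cos_angle cv (z j) (z k) = cc j k.
Proof. by rewrite (cos_unit Hcv) //; exact: z_unit. Qed.

Lemma Delta_eq j k : Dl j k = (c j + c k) ^+ 2 - 4 * cc j k.
Proof. by rewrite /Delta !cwz_eq cos_zz. Qed.

Lemma alpha_eq j k : alpha_jk cv f lam eta j k = (c j + c k - Num.sqrt (Dl j k)) / 2.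
Proof. by rewrite /alpha_jk !cwz_eq. Qed.

Lemma Q_eq a j k : cv (dvar f lam eta a j) (dvar f lam eta a k) = Q j k a.
Proof.
rewrite /dvar (cvBl Hcv) !(cvBr Hcv) !(cvZl Hcv a) !(cvZr Hcv a) cv_ww.
rewrite (cvC Hcv w (z k)); ring.
Qed.

Lemma Delta_sym j k : Dl j k = Dl k j.
Proof. by rewrite !Delta_eq (cvC Hcv (z j) (z k)) (addrC (c j)). Qed.

Lemma alpha_sym j k : alpha_jk cv f lam eta j k = alpha_jk cv f lam eta k j.
Proof. by rewrite !alpha_eq Delta_sym (addrC (c j)). Qed.

Lemma orth_iff b : orth_pair cv f lam eta b <->
  exists j k : 'I_K, (j < k)%N /\ Q j k b = 0.
Proof.
split.
  move=> [j [k [Hjk]]]; rewrite /perp Q_eq => HQ.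
  case: (ltngtP j k) => [H|H|H].
  - by exists j, k.
  - exists k, j; split => //; rewrite (cvC Hcv) -HQ; ring.
  - by move/val_inj: H => H; rewrite H eqxx in Hjk.
move=> [j [k [Hjk HQ]]]; exists j, k; split.
  by rewrite neq_ltn Hjk.
by rewrite /perp Q_eq.
Qed.

Lemma two_neq0 : (2 : R) != 0. Proof. by rewrite pnatr_eq0. Qed.

Lemma root_cases j k b : Q j k b = 0 ->
  0 <= Dl j k /\ (b = alpha_jk cv f lam eta j k \/
                 b = (c j + c k + Num.sqrt (Dl j k)) / 2).
Proof.
move=> HQ.
have HD : Dl j k = (2 * b - (c j + c k)) ^+ 2.
  rewrite Delta_eq; have -> : cc j k = b * (c j + c k) - b ^+ 2.
    by apply/eqP; rewrite -subr_eq0 -HQ; apply/eqP; ring.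
  ring.
split; first by rewrite HD sqr_ge0.
rewrite alpha_eq HD sqrtr_sqr.
have t0 := two_neq0.
case: (lerP 0 (2 * b - (c j + c k))) => H.
  by right; rewrite ger0_norm //; field.
by left; rewrite ltr0_norm //; field.
Qed.

Lemma alpha_root j k : 0 <= Dl j k -> Q j k (alpha_jk cv f lam eta j k) = 0.
Proof.
move=> HD; rewrite alpha_eq.
have := sqr_sqrtr HD; rewrite Delta_eq.
set q := Num.sqrt _; set S := c j + c k; set C := cc j k => Hq.
have t0 := two_neq0.
have -> : C = (S ^+ 2 - q ^+ 2) / 4.
  by rewrite Hq; field.
by field.
Qed.

Lemma alpha_le_plus j k : 0 <= Dl j k ->
  `|alpha_jk cv f lam eta j k| <= (c j + c k + Num.sqrt (Dl j k)) / 2 /\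
  0 <= (c j + c k + Num.sqrt (Dl j k)) / 2.
Proof.
move=> HD; rewrite alpha_eq.
have hc := addr_ge0 (c_ge0 j) (c_ge0 k).
have hq := sqrtr_ge0 (Dl j k).
set q := Num.sqrt _ in hq *; set S := c j + c k in hc *.
split; last by apply: divr_ge0; lra.
rewrite ler_norml; apply/andP; split; lra.
Qed.

Lemma part1 : exists j k : 'I_K, (j < k)%N /\ 0 <= Dl j k.
Proof.
pose B := \sum_(k < K) beta k.
have HB : 0 < B.
  rewrite lt0r sumr_ge0 ?andbT; last by move=> k _; exact: beta_ge0.
  apply/eqP => B0.
  have := cv_ww; rewrite w_decomp big1 ?(cv0l Hcv) => [|k _].
    by move/eqP; rewrite eq_sym oner_eq0.
  have := @psumr_eq0P _ _ xpredT beta (fun k _ => beta_ge0 k) B0 k isT.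
  by move=> ->; rewrite scale0r.
pose a := B^-1.
pose u k := dvar f lam eta a k.
have Hsum : \sum_(k < K) beta k *: u k = 0.
  rewrite /u /dvar.
  under eq_bigr => k _ do rewrite scalerBr.
  rewrite sumrB -w_decomp -scaler_suml scalerA -/B /a divff ?scale1r ?subrr //.
  exact: lt0r_neq0.
have Hexp : \sum_(j < K) \sum_(k < K) beta j * beta k * cv (u j) (u k) = 0.
  have E : cv (\sum_(k < K) beta k *: u k) (\sum_(k < K) beta k *: u k) = 0.
    by rewrite Hsum (cv0l Hcv).
  rewrite -[RHS]E (cv_suml Hcv).
  apply: eq_bigr => j _; rewrite (cvZl Hcv) (cv_sumr Hcv) mulr_sumr.
  by apply: eq_bigr => k _; rewrite (cvZr Hcv); ring.
have [[j [k [Hjk Hle]]]|Hno] :=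
  classic (exists j k : 'I_K, j != k /\ cv (u j) (u k) <= 0).
  have HD : 0 <= Dl j k.
    move: Hle; rewrite /u Q_eq Delta_eq => Hle.
    have -> : (c j + c k) ^+ 2 - 4 * cc j k =
              (c j + c k - 2 * a) ^+ 2 - 4 * Q j k a by ring.
    have := sqr_ge0 (c j + c k - 2 * a); lra.
  case: (ltngtP j k) => [H|H|H].
  - by exists j, k.
  - by exists k, j; rewrite -Delta_sym.
  - by move/val_inj: H => H; rewrite H eqxx in Hjk.
exfalso.
have Hpos : forall j k : 'I_K, j != k -> 0 < cv (u j) (u k).
  move=> j k Hjk; rewrite ltNge; apply/negP => Hle; apply: Hno.
  by exists j, k.
have Hterm : forall j k : 'I_K, 0 <= beta j * beta k * cv (u j) (u k).
  move=> j k; apply: mulr_ge0; first exact: mulr_ge0 (beta_ge0 j) (beta_ge0 k).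
  case: (eqVneq j k) => [<-|Hjk]; first exact: cv_ge0.
  exact: ltW (Hpos j k Hjk).
have Hz : forall j k : 'I_K, beta j * beta k * cv (u j) (u k) = 0.
  move=> j k.
  have Hin := @psumr_eq0P _ _ xpredT (fun j : 'I_K => \sum_(k < K) beta j * beta k * cv (u j) (u k))
     (fun j _ => sumr_ge0 _ (fun k _ => Hterm j k)) Hexp j isT.
  exact: (@psumr_eq0P _ _ xpredT (fun k : 'I_K => beta j * beta k * cv (u j) (u k))
     (fun k _ => Hterm j k) Hin k isT).
have [k0 Hk0] : exists k0, 0 < beta k0.
  apply: NNPP => Hn; move: HB; rewrite /B big1 ?ltxx // => k _.
  apply/eqP; rewrite eq_le beta_ge0 andbT leNgt; apply/negP => Hk.
  by apply: Hn; exists k.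
have Hu0 : u k0 = 0.
  apply: (cv_eq0 Hcv); have := Hz k0 k0.
  have bb : beta k0 * beta k0 != 0 by rewrite mulf_neq0 // lt0r_neq0.
  by move/eqP; rewrite mulf_eq0 (negbTE bb) /= => /eqP.
have h0 : (0 < K)%N by apply: leq_trans HK.
pose j0 : 'I_K := if val k0 == 0%N then Ordinal HK else Ordinal h0.
have Hj0 : j0 != k0.
  rewrite /j0; case: ifP => H; apply/negP => /eqP E; move: H;
  by rewrite -E /= ?eqxx.
have := Hpos j0 k0 Hj0; rewrite Hu0 (cv0r Hcv) ltxx //.
Qed.


Lemma norm_cases (x : R) : x = `|x| \/ x = - `|x|.
Proof.
case: (lerP 0 x) => H; [left; rewrite ger0_norm // | right; rewrite ltr0_norm ?opprK //].
Qed.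

Lemma alpha_orth (j k : 'I_K) : (j < k)%N -> 0 <= Dl j k ->
  orth_pair cv f lam eta (alpha_jk cv f lam eta j k).
Proof. by move=> Hjk HD; apply/orth_iff; exists j, k; split => //; exact: alpha_root. Qed.

Lemma part2 : exists a, alpha_spec cv f lam eta a.
Proof.
have [j0 [k0 [H0 D0]]] := part1.
pose P (p : 'I_K * 'I_K) := (p.1 < p.2)%N && (0 <= Dl p.1 p.2).
pose F (p : 'I_K * 'I_K) := `|alpha_jk cv f lam eta p.1 p.2|.
have P0 : P (j0, k0) by rewrite /P H0 D0.
case: (arg_minP F P0) => -[jm km] Pm Hm.
move: Pm; rewrite /P /= => /andP [Hjm Dm].
set al := alpha_jk cv f lam eta jm km.
have m_ge0 : 0 <= `|al| by [].
have Hlow : forall b, orth_pair cv f lam eta b -> `|al| <= `|b|.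
  move=> b /orth_iff [j [k [Hjk HQ]]].
  have [HD [->|->]] := root_cases _ _ _ HQ.
    by apply: (Hm (j, k)); rewrite /P /= Hjk HD.
  have [Hle Hge] := alpha_le_plus _ _ HD.
  apply: le_trans (Hm (j, k) _) _; first by rewrite /P /= Hjk HD.
  by rewrite /F /= (ger0_norm Hge).
have Hal : orth_pair cv f lam eta al by exact: alpha_orth.
case: (classic (orth_pair cv f lam eta (- `|al|))) => Hneg.
  exists (- `|al|); split => //.
    by move=> b Hb; rewrite normrN normr_id; exact: Hlow.
  move=> b Hb; rewrite normrN normr_id => Hbn Hne.
  rewrite oppr_lt0 lt0r normr_ge0 andbT; apply/negP => /eqP E.
  by apply: Hne; move/eqP: Hbn; rewrite E normr_eq0 oppr0 => /eqP.
have Hpos : orth_pair cv f lam eta `|al|.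
  case: (norm_cases al) => E; first by rewrite -E.
  by exfalso; apply: Hneg; rewrite -E.
exists `|al|; split => //.
  by move=> b Hb; rewrite normr_id; exact: Hlow.
move=> b Hb; rewrite normr_id => Hbn Hne; exfalso.
case: (norm_cases b) => E.
  by apply: Hne; rewrite E Hbn.
by apply: Hneg; rewrite -Hbn -E.
Qed.

Lemma part3 a : alpha_spec cv f lam eta a -> in_argmin_alpha cv f lam eta a.
Proof.
case=> Ha Hmin Htie.
move: (Ha) => /orth_iff [j [k [Hjk HQ]]].
have [HD Hc] := root_cases _ _ _ HQ.
exists j, k; split => //; last first.
  by move=> j' k' Hjk' HD'; apply: Hmin; exact: alpha_orth.
case: Hc => // Hplus.
set al := alpha_jk cv f lam eta j k in Hplus *.
case: (eqVneq al a) => [//|Hne].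
have [Hle Hge] := alpha_le_plus _ _ HD.
rewrite -/al -Hplus in Hle Hge.
have Hal := alpha_orth _ _ Hjk HD; rewrite -/al in Hal.
have Habs : `|al| = `|a|.
  apply/eqP; rewrite eq_le Hmin // andbT; apply: le_trans Hle _.
  by rewrite ger0_norm.
have := Htie al Hal Habs (elimN eqP Hne); rewrite ltNge Hge //.
Qed.

End Fixed.

Section LamPos.
Variables (R : rcfType) (V : lmodType R) (cv : V -> V -> R).
Hypothesis Hcv : is_inner_product cv.
Variables (K : nat) (r : 'I_K -> nat) (f : forall k : 'I_K, 'I_(r k) -> V).
Variables (rf : nat) (lam : 'I_#|{: idx r}| -> R) (eta : 'I_#|{: idx r}| -> idx r -> R).
Variable (l : 'I_#|{: idx r}|).
Hypothesis Horth : forall i j, \sum_(t : idx r) eta i t * eta j t = (i == j)%:R.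
Hypothesis Heig : forall i t, \sum_(s : idx r) covf cv f t s * eta i s = lam i * eta i t.
Hypothesis Hsort : forall i j : 'I_#|{: idx r}|, (i <= j)%N -> lam j <= lam i.
Hypothesis Hrank : span_dim (fcat f) rf.
Hypothesis Hl : (l < rf)%N.

Local Notation N := #|{: idx r}|.
Definition g (i : 'I_N) := \sum_(t : idx r) eta i t *: fcat f t.

Lemma cv_gg i : cv (g i) (g i) = lam i.
Proof.
rewrite /g (cv_suml Hcv).
have -> : \sum_(t : idx r) cv (eta i t *: fcat f t) (\sum_(t0 : idx r) eta i t0 *: fcat f t0)
  = \sum_(t : idx r) lam i * (eta i t * eta i t).
  apply: eq_bigr => t _; rewrite (cvZl Hcv) (cv_sumr Hcv).
  have -> : \sum_(s : idx r) cv (fcat f t) (eta i s *: fcat f s) = lam i * eta i t.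
    by rewrite -Heig; apply: eq_bigr => s _; rewrite (cvZr Hcv) mulrC.
  ring.
by rewrite -mulr_sumr Horth eqxx mulr1.
Qed.

Lemma col_orth s t : \sum_(i < N) eta i s * eta i t = (s == t)%:R.
Proof.
pose E : 'M[R]_N := \matrix_(i, j) eta i (enum_val j).
have H1 : E *m E^T = 1%:M.
  apply/matrixP => i j; rewrite !mxE.
  have Hb := enum_val_bij (idx r).
  rewrite -Horth [RHS](reindex _ (onW_bij _ Hb)) /=.
  by apply: eq_bigr => m _; rewrite !mxE.
have := mulmx1C H1 => /matrixP /(_ (enum_rank s) (enum_rank t)).
rewrite !mxE (inj_eq enum_rank_inj) => <-.
by apply: eq_bigr => i _; rewrite !mxE !enum_rankK.
Qed.

Lemma f_decomp t : fcat f t = \sum_(i < N) eta i t *: g i.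
Proof.
rewrite /g.
have -> : \sum_(i < N) eta i t *: \sum_(s : idx r) eta i s *: fcat f s =
          \sum_(s : idx r) (\sum_(i < N) eta i t * eta i s) *: fcat f s.
  under eq_bigr => i _ do rewrite scaler_sumr.
  rewrite exchange_big /=; apply: eq_bigr => s _; rewrite scaler_suml.
  by apply: eq_bigr => i _; rewrite scalerA.
under eq_bigr => s _ do rewrite col_orth.
rewrite (bigD1 t) //= eqxx scale1r big1 ?addr0 // => s Hs.
by rewrite eq_sym (negbTE Hs) scale0r.
Qed.

Lemma lam_pos : 0 < lam l.
Proof.
apply: NNPP => Hn.
have Hg0 : forall i : 'I_N, (l <= i)%N -> g i = 0.
  move=> i Hi; apply: (cv_eq0 Hcv); rewrite cv_gg.
  apply/eqP; rewrite eq_le; apply/andP; split.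
    apply: le_trans (Hsort l i Hi) _; rewrite leNgt; apply/negP => H; exact: Hn.
  by rewrite -cv_gg; exact: cv_ge0.
have Hf2 : forall t, fcat f t = \sum_(i < N | (i < l)%N) eta i t *: g i.
  move=> t; rewrite f_decomp (bigID (fun i : 'I_N => (i < l)%N)) /=.
  rewrite [X in _ + X]big1 ?addr0 // => i.
  by rewrite -leqNgt => /Hg0 ->; rewrite scaler0.
case: Hrank => [[A [HA cA]]] _.
have lN : (l <= N)%N by exact: ltnW (ltn_ord l).
pose M : 'M[R]_(#|A|, l) := \matrix_(a, i) eta (widen_ord lN i) (enum_val a).
have HnF : ~~ row_free M.
  rewrite /row_free; apply/negP => /eqP E.
  have := rank_leq_col M; rewrite E cA => H.
  by move: (leq_trans Hl H); rewrite ltnn.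
have : kermx M != 0 by rewrite kermx_eq0.
move=> Hk.
have [a0 Ha0] : exists a0, row a0 (kermx M) != 0.
  apply: NNPP => Hno; move/eqP: Hk; apply; apply/matrixP => i j.
  have : row i (kermx M) = 0.
    by apply/eqP; apply: NNPP => H; apply: Hno; exists i; apply/negP.
  by move/matrixP/(_ 0 j); rewrite !mxE.
set v := row a0 (kermx M) in Ha0.
have Hv : v *m M = 0 by rewrite /v -row_mul mulmx_ker row0.
have [t0 t0A] : exists t0, t0 \in A.
  by apply/card_gt0P; rewrite cA; apply: leq_ltn_trans Hl.
pose c t := v 0 (enum_rank_in t0A t).
have Hsum : \sum_(t in A) c t *: fcat f t = 0.
  under eq_bigr => t _ do rewrite Hf2 scaler_sumr.
  rewrite exchange_big /= big1 // => i Hi.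
  under eq_bigr => t _ do rewrite scalerA.
  rewrite -scaler_suml.
  have -> : \sum_(t in A) c t * eta i t = 0.
    rewrite big_enum_val.
    have E0 : (v *m M) 0 (Ordinal Hi) = 0 by rewrite Hv mxE.
    rewrite -[RHS]E0 mxE.
    apply: eq_bigr => a _; rewrite /c enum_valK_in !mxE.
    by congr (_ * eta _ _); apply: val_inj.
  by rewrite scale0r.
have Hc := HA c Hsum.
move/eqP: Ha0; apply; apply/matrixP => i a.
rewrite (ord1 i) [RHS]mxE.
by have := Hc (enum_val a) (enum_valP a); rewrite /c enum_valK_in.
Qed.
End LamPos.

Theorem theorem2 (R : rcfType) (V : lmodType R) (cv : V -> V -> R)
  (K : nat) (p : 'I_K -> nat) (x : forall k : 'I_K, 'I_(p k) -> V)
  (r : 'I_K -> nat) (f : forall k : 'I_K, 'I_(r k) -> V) (rf : nat)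
  (lam : 'I_#|{: idx r}| -> R) (eta : 'I_#|{: idx r}| -> idx r -> R)
  (l : 'I_#|{: idx r}|) :
  is_inner_product cv ->
  (2 <= K)%N ->
  (forall k, span_dim (x k) (r k)) ->
  (forall k, (1 <= r k)%N) ->
  (forall k (i j : 'I_(r k)), cv (f k i) (f k j) = (i == j)%:R) ->
  (forall k i, in_span (x k) (f k i)) ->
  (forall k j, in_span (f k) (x k j)) ->
  span_dim (fcat f) rf ->
  (forall i j, \sum_(t : idx r) eta i t * eta j t = (i == j)%:R) ->
  (forall i t, \sum_(s : idx r) covf cv f t s * eta i s = lam i * eta i t) ->
  (forall i j : 'I_#|{: idx r}|, (i <= j)%N -> lam j <= lam i) ->
  (l < rf)%N ->
  (exists j k : 'I_K, (j < k)%N /\ 0 <= Delta cv f (lam l) (eta l) j k) /\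
  (exists a, alpha_spec cv f (lam l) (eta l) a) /\
  (forall a, alpha_spec cv f (lam l) (eta l) a ->
             in_argmin_alpha cv f (lam l) (eta l) a).
Proof.
move=> Hcv HK _ _ Hf _ _ Hrank Horth Heig Hsort Hl.
have Hlam := lam_pos _ _ _ Hcv _ _ _ _ _ _ _ Horth Heig Hsort Hrank Hl.
have Hn : \sum_(t : idx r) eta l t * eta l t = 1 by rewrite Horth eqxx.
split; first exact: (part1 _ _ _ Hcv _ _ _ _ _ Hf (Heig l) Hn Hlam HK).
split; first exact: (part2 _ _ _ Hcv _ _ _ _ _ Hf (Heig l) Hn Hlam HK).
exact: (part3 _ _ _ Hcv _ _ _ _ _ Hf (Heig l) Hn Hlam).
Qed.
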